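(* Let $\gamma_0:[0,1]\to\mathbb{R}^3$ be a regular horizontal curve, and let $\gamma:[0,\hat T)\times[0,1]\to\mathbb{R}^3$ be a sufficiently smooth family with $\gamma(0,\cdot)=\gamma_0$, $|\gamma_u(t,u)|_g\neq0$ for all $(t,u)$, and $\gamma_t(t,u)=q(t,u)T(t,u)$ for some sufficiently smooth $q:[0,\hat T)\times[0,1]\to\mathbb{R}$. Then $\gamma(t,\cdot)$ is horizontal for every $t\in[0,\hat T)$.
   Context: Write $\gamma=(\gamma^1,\gamma^2,\gamma^3)^t$. A curve is horizontal if $\gamma^3_u=-\tfrac12\gamma^2\gamma^1_u+\tfrac12\gamma^1\gamma^2_u$ on $[0,1]$; $|\gamma_u|_g=\sqrt{(\gamma^1_u)^2+(\gamma^2_u)^2}$; regular means $|\gamma_u|_g\ne0$. $T=\frac1{|\gamma_u|_g}\big(\gamma^1_u,\ \gamma^2_u,\ -\tfrac12\gamma^2\gamma^1_u+\tfrac12\gamma^1\gamma^2_u\big)^t$. *)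

(* Defs.v *)
From Stdlib Require Import Reals.
From Coquelicot Require Import Coquelicot.
Open Scope R_scope.

(* A family gamma(t,u) is given componentwise by functions R -> R -> R. *)
Definition pt (f : R -> R -> R) (t u : R) : R := Derive (fun s => f s u) t.
Definition pu (f : R -> R -> R) (t u : R) : R := Derive (fun v => f t v) u.

Definition smooth1 (f : R -> R -> R) : Prop :=
  forall t u,
    ex_derive (fun s => f s u) t /\ ex_derive (fun v => f t v) u /\
    continuous (fun p : R * R => f (fst p) (snd p)) (t, u) /\
    continuous (fun p : R * R => pt f (fst p) (snd p)) (t, u) /\
    continuous (fun p : R * R => pu f (fst p) (snd p)) (t, u).

Definition smooth2 (f : R -> R -> R) : Prop := smooth1 f /\ smooth1 (pt f) /\ smooth1 (pu f).

Definition gnorm (g1 g2 : R -> R -> R) (t u : R) : R :=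
  sqrt (pu g1 t u ^ 2 + pu g2 t u ^ 2).

(* third component of the horizontal lift of (gamma^1_u, gamma^2_u) *)
Definition hor3 (g1 g2 : R -> R -> R) (t u : R) : R :=
  - (1/2) * g2 t u * pu g1 t u + (1/2) * g1 t u * pu g2 t u.

Definition horizontal_at (g1 g2 g3 : R -> R -> R) (t : R) : Prop :=
  forall u, 0 <= u <= 1 -> pu g3 t u = hor3 g1 g2 t u.

(* Main.v *)
Require Import Defs.
From Stdlib Require Import Reals Lra.
From Coquelicot Require Import Coquelicot.
Open Scope R_scope.
Lemma hor3_u g1 g2 s v : smooth2 g1 -> smooth2 g2 ->
  is_derive (fun w => hor3 g1 g2 s w) v
   (-(1/2)*(pu g2 s v * pu g1 s v + g2 s v * pu (pu g1) s v)
    + (1/2)*(pu g1 s v * pu g2 s v + g1 s v * pu (pu g2) s v)).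
Proof.
  intros [A1 [B1 C1]] [A2 [B2 C2]]. unfold hor3.
  auto_derive.
  - repeat split; first [apply (proj1 (proj2 (A1 s v))) | apply (proj1 (proj2 (A2 s v))) | apply (proj1 (proj2 (C1 s v))) |apply (proj1 (proj2 (C2 s v)))].
  - change (Derive (fun x : R => g2 s x) v) with (pu g2 s v).
    change (Derive (fun x : R => g1 s x) v) with (pu g1 s v).
    change (Derive (fun x : R => pu g1 s x) v) with (pu (pu g1) s v).
    change (Derive (fun x : R => pu g2 s x) v) with (pu (pu g2) s v).
    ring.
Qed.
Lemma hor3_t g1 g2 s v : smooth2 g1 -> smooth2 g2 ->
  is_derive (fun w => hor3 g1 g2 w v) s
   (-(1/2)*(pt g2 s v * pu g1 s v + g2 s v * pt (pu g1) s v)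
    + (1/2)*(pt g1 s v * pu g2 s v + g1 s v * pt (pu g2) s v)).
Proof.
  intros [A1 [B1 C1]] [A2 [B2 C2]]. unfold hor3.
  auto_derive.
  - repeat split; first [apply (proj1 (A1 s v)) | apply (proj1 (A2 s v)) | apply (proj1 (C1 s v)) |apply (proj1 (C2 s v))].
  - change (Derive (fun x : R => g2 x v) s) with (pt g2 s v).
    change (Derive (fun x : R => g1 x v) s) with (pt g1 s v).
    change (Derive (fun x : R => pu g1 x v) s) with (pt (pu g1) s v).
    change (Derive (fun x : R => pu g2 x v) s) with (pt (pu g2) s v).
    ring.
Qed.
Lemma gnorm_ex g1 g2 s v : smooth2 g1 -> smooth2 g2 -> gnorm g1 g2 s v <> 0 ->
  ex_derive (fun w => gnorm g1 g2 s w) v.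
Proof.
  intros [A1 [B1 C1]] [A2 [B2 C2]] Hn. unfold gnorm in *.
  eexists. apply is_derive_sqrt.
  - apply Derive_correct. auto_derive.
    split; [apply (proj1 (proj2 (C1 s v)))|split;[apply (proj1 (proj2 (C2 s v)))|exact I]].
  - destruct (Rle_or_lt (pu g1 s v ^ 2 + pu g2 s v ^ 2) 0) as [h|h]; auto.
    exfalso. apply Hn. apply sqrt_neg_0. exact h.
Qed.
Lemma prod_div (Q X N : R -> R) v dX : ex_derive Q v -> is_derive X v dX -> ex_derive N v -> N v <> 0 ->
  Derive (fun w => Q w * (X w / N w)) v = Derive Q v * (X v / N v) + Q v * ((dX * N v - X v * Derive N v) / (N v)^2).
Proof.
  intros HQ HX HN Hn. apply is_derive_unique.
  apply (Derive.is_derive_mult Q (fun w => X w / N w)).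
  - apply Derive_correct; auto.
  - apply is_derive_div; auto. apply Derive_correct; auto.
Qed.

Lemma schw (f : R -> R -> R) : smooth2 f -> forall s u, pt (pu f) s u = pu (pt f) s u.
Proof.
  intros [Hf [Ht Hu]] s u.
  unfold pt, pu. apply Schwarz.
  - exists (mkposreal 1 Rlt_0_1). intros a b _ _.
    destruct (Hf a b) as [A [B _]].
    destruct (Hu a b) as [C _].
    destruct (Ht a b) as [_ [D _]].
    repeat split; assumption.
  - apply continuity_2d_pt_filterlim. apply (Hu s u).
  - apply continuity_2d_pt_filterlim. apply (Ht s u).
Qed.


Lemma dh_zero g1 g2 g3 q That s v :
  smooth2 g1 -> smooth2 g2 -> smooth2 g3 -> smooth1 q ->
  (forall t u, 0 <= t < That -> 0 <= u <= 1 -> gnorm g1 g2 t u <> 0) ->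
  (forall t u, 0 <= t < That -> 0 <= u <= 1 ->
     pt g1 t u = q t u * (pu g1 t u / gnorm g1 g2 t u) /\
     pt g2 t u = q t u * (pu g2 t u / gnorm g1 g2 t u) /\
     pt g3 t u = q t u * (hor3 g1 g2 t u / gnorm g1 g2 t u)) ->
  0 <= s < That -> 0 < v < 1 ->
  is_derive (fun s' => pu g3 s' v - hor3 g1 g2 s' v) s 0.
Proof.
  intros S1 S2 S3 SQ Hn Hq Hs Hv.
  assert (HN0 : gnorm g1 g2 s v <> 0) by (apply Hn; lra).
  assert (HNe : ex_derive (gnorm g1 g2 s) v) by (apply gnorm_ex; auto).
  assert (HQe : ex_derive (q s) v) by apply (proj1 (proj2 (SQ s v))).
  assert (E1 : pu (pt g1) s v = Derive (q s) v * (pu g1 s v / gnorm g1 g2 s v) + q s v * ((pu (pu g1) s v * gnorm g1 g2 s v - pu g1 s v * Derive (gnorm g1 g2 s) v) / (gnorm g1 g2 s v)^2)).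
  { transitivity (Derive (fun w => q s w * (pu g1 s w / gnorm g1 g2 s w)) v).
    - unfold pu at 1. apply Derive_ext_loc.
      apply locally_interval with 0 1; simpl; try lra.
      intros y Hy1 Hy2. apply (proj1 (Hq s y Hs ltac:(lra))).
    - apply prod_div; auto. apply Derive_correct. destruct S1 as [_ [_ C]]. apply (proj1 (proj2 (C s v))). }
  assert (E2 : pu (pt g2) s v = Derive (q s) v * (pu g2 s v / gnorm g1 g2 s v) + q s v * ((pu (pu g2) s v * gnorm g1 g2 s v - pu g2 s v * Derive (gnorm g1 g2 s) v) / (gnorm g1 g2 s v)^2)).
  { transitivity (Derive (fun w => q s w * (pu g2 s w / gnorm g1 g2 s w)) v).
    - unfold pu at 1. apply Derive_ext_loc.
      apply locally_interval with 0 1; simpl; try lra.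
      intros y Hy1 Hy2. apply (proj1 (proj2 (Hq s y Hs ltac:(lra)))).
    - apply prod_div; auto. apply Derive_correct. destruct S2 as [_ [_ C]]. apply (proj1 (proj2 (C s v))). }
  assert (E3 : pu (pt g3) s v = Derive (q s) v * (hor3 g1 g2 s v / gnorm g1 g2 s v) + q s v * (((-(1/2)*(pu g2 s v * pu g1 s v + g2 s v * pu (pu g1) s v)
    + (1/2)*(pu g1 s v * pu g2 s v + g1 s v * pu (pu g2) s v)) * gnorm g1 g2 s v - hor3 g1 g2 s v * Derive (gnorm g1 g2 s) v) / (gnorm g1 g2 s v)^2)).
  { transitivity (Derive (fun w => q s w * (hor3 g1 g2 s w / gnorm g1 g2 s w)) v).
    - unfold pu at 1. apply Derive_ext_loc.
      apply locally_interval with 0 1; simpl; try lra.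
      intros y Hy1 Hy2. apply (proj2 (proj2 (Hq s y Hs ltac:(lra)))).
    - apply prod_div; auto. apply hor3_u; auto. }
  destruct (Hq s v Hs ltac:(lra)) as [F1 [F2 F3]].
  assert (HD : is_derive (fun s' => pu g3 s' v - hor3 g1 g2 s' v) s
     (pt (pu g3) s v - (-(1/2)*(pt g2 s v * pu g1 s v + g2 s v * pt (pu g1) s v)
    + (1/2)*(pt g1 s v * pu g2 s v + g1 s v * pt (pu g2) s v)))).
  { apply (is_derive_minus (fun s' => pu g3 s' v) (fun s' => hor3 g1 g2 s' v)).
    - apply Derive_correct. destruct S3 as [_ [_ C]]. apply (proj1 (C s v)).
    - apply hor3_t; auto. }
  replace 0 with (pt (pu g3) s v - (-(1/2)*(pt g2 s v * pu g1 s v + g2 s v * pt (pu g1) s v)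
    + (1/2)*(pt g1 s v * pu g2 s v + g1 s v * pt (pu g2) s v))); [exact HD|].
  rewrite !schw by auto.
  rewrite E1, E2, E3, F1, F2.
  unfold hor3. field. exact HN0.
Qed.

Lemma zero_closure (f : R -> R) u : 0 <= u <= 1 -> continuous f u ->
  (forall v, 0 < v < 1 -> f v = 0) -> f u = 0.
Proof.
  intros Hu Hc Hz.
  destruct (Req_dec (f u) 0) as [E|E]; auto. exfalso.
  assert (Hp : 0 < Rabs (f u)) by (apply Rabs_pos_lt; auto).
  pose proof (proj1 (filterlim_locally _ _) Hc (mkposreal _ Hp)) as L. destruct L as [d Hd].
  set (m := Rmin (d/2) (1/4)).
  assert (Hm1 : 0 < m) by (unfold m; apply Rmin_glb_lt; [destruct d; simpl; lra | lra]).
  assert (Hm2 : m <= d/2) by apply Rmin_l.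
  assert (Hm3 : m <= 1/4) by apply Rmin_r.
  assert (Hdp : 0 < d) by (destruct d; auto).
  destruct (Rle_or_lt u (1/2)) as [Hu2|Hu2].
  - assert (B : ball u d (u + m)).
    { change (Rabs ((u + m) - u) < d). rewrite Rabs_pos_eq; lra. }
    specialize (Hd _ B). change (Rabs (f (u+m) - f u) < Rabs (f u)) in Hd.
    rewrite Hz in Hd by lra. rewrite Rminus_0_l, Rabs_Ropp in Hd. lra.
  - assert (B : ball u d (u - m)).
    { change (Rabs ((u - m) - u) < d). rewrite Rabs_left; lra. }
    specialize (Hd _ B). change (Rabs (f (u-m) - f u) < Rabs (f u)) in Hd.
    rewrite Hz in Hd by lra. rewrite Rminus_0_l, Rabs_Ropp in Hd. lra.
Qed.

Theorem lemma2p14 (g1 g2 g3 q : R -> R -> R) (That : R) :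
  smooth2 g1 -> smooth2 g2 -> smooth2 g3 -> smooth1 q ->
  (* gamma_0 = gamma(0,.) is a regular horizontal curve *)
  horizontal_at g1 g2 g3 0 ->
  (forall u, 0 <= u <= 1 -> gnorm g1 g2 0 u <> 0) ->
  (* |gamma_u|_g <> 0 on [0,That) x [0,1] *)
  (forall t u, 0 <= t < That -> 0 <= u <= 1 -> gnorm g1 g2 t u <> 0) ->
  (* gamma_t = q T on [0,That) x [0,1] *)
  (forall t u, 0 <= t < That -> 0 <= u <= 1 ->
     pt g1 t u = q t u * (pu g1 t u / gnorm g1 g2 t u) /\
     pt g2 t u = q t u * (pu g2 t u / gnorm g1 g2 t u) /\
     pt g3 t u = q t u * (hor3 g1 g2 t u / gnorm g1 g2 t u)) ->
  forall t, 0 <= t < That -> horizontal_at g1 g2 g3 t.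
Proof.
  intros S1 S2 S3 SQ H0 _ Hn Hq t Ht u Hu.
  apply Rminus_diag_uniq.
  apply (zero_closure (fun w => pu g3 t w - hor3 g1 g2 t w) u Hu).
  - apply (ex_derive_continuous (K:=R_AbsRing) (V:=R_NormedModule)). eexists.
    apply (is_derive_minus (fun w => pu g3 t w) (fun w => hor3 g1 g2 t w)).
    + apply Derive_correct. destruct S3 as [_ [_ C]]. apply (proj1 (proj2 (C t u))).
    + apply hor3_u; auto.
  - intros v Hv.
    destruct (MVT_gen (fun s => pu g3 s v - hor3 g1 g2 s v) 0 t (fun _ => 0)) as [c [_ Hc]].
    + intros x Hx. rewrite Rmin_left, Rmax_right in Hx by lra.
      apply (dh_zero g1 g2 g3 q That); auto; lra.
    + intros x Hx. rewrite Rmin_left, Rmax_right in Hx by lra.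
      apply (proj2 (continuity_pt_filterlim (fun s => pu g3 s v - hor3 g1 g2 s v) x)).
      assert (D : ex_derive (fun s => pu g3 s v - hor3 g1 g2 s v) x).
      { exists 0. apply (dh_zero g1 g2 g3 q That); auto; lra. }
      exact (ex_derive_continuous _ _ D).
    + simpl in Hc. rewrite (H0 v ltac:(lra)) in Hc. lra.
Qed.
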